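(* Let $G_3^*$ be the set of positive integers $k$ such that every exponent occurring in the prime factorization of $k$ (i.e. $v_p(k)$ for every prime $p \mid k$) belongs to $A_3^*$, where $A_3^*$ is the set of nonnegative integers whose base-$3$ expansion contains no digit $2$. Then the upper uniform density of $G_3^*$ satisfies $\overline{u}(G_3^* ) \le 7/8$.
   Context: $A_3^*$ is the greedy set of nonnegative integers free of 3-term arithmetic progressions, and $G_3^*$ (by Rankin's characterization) is the greedy set of positive integers free of 3-term geometric progressions $a, ar, ar^2$ with integer ratio $r>1$. For $A\subseteq \mathbb{N}$, the upper uniform density is $\overline{u}(A) = \lim_{s\to\infty} \max_{n\ge 0} \frac{1}{s}\,\#\{a\in A : n < a \le n+s\}$. *)

(* Defs.v *)
From HB Require Import structures.
From mathcomp Require Import all_boot all_order all_algebra.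
From mathcomp Require Import all_classical all_reals all_analysis.
Set Implicit Arguments. Unset Strict Implicit. Unset Printing Implicit Defensive.
Import Order.TTheory GRing.Theory Num.Theory.
Local Open Scope classical_set_scope.
Local Open Scope ring_scope.

(* A_3^* : nonnegative integers whose base-3 expansion has no digit 2.
   The i-th base-3 digit of k is (k %/ 3^i) %% 3. *)
Definition inA3 (k : nat) : Prop := forall i : nat, ((k %/ 3 ^ i) %% 3 <> 2)%N.

Definition inG3 (k : nat) : Prop :=
  (0 < k)%N /\ forall p : nat, prime p -> (p %| k)%N -> inA3 (logn p k).

Definition window_count (A : nat -> Prop) (n s : nat) : nat :=
  (\sum_(n.+1 <= a < (n + s).+1) (`[< A a >] : nat))%N.

(* max_{n >= 0} #{ a in A : n < a <= n+s } (the max exists, the counts are <= s) *)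
Definition max_window (R : realType) (A : nat -> Prop) (s : nat) : R :=
  sup [set ((window_count A n s)%:R : R) | n in [set: nat]].

(* Upper uniform density: lim_{s -> oo} max_n (1/s) #{a in A : n < a <= n+s}.
   The limit exists (subadditivity); we take it as limsup, which equals it. *)
Definition upper_uniform_density (R : realType) (A : nat -> Prop) : R :=
  limn_sup (fun s : nat => max_window R A s / (s%:R : R)).

(* Main.v *)
Require Import Defs.
From mathcomp Require Import all_boot all_order all_algebra.
From mathcomp Require Import all_classical all_reals all_analysis.
From mathcomp Require Import zify lra.
Import Order.TTheory GRing.Theory Num.Theory.

Lemma notG3 j : j %% 8 = 4 -> ~ inG3 j.
Proof.
move=> hj [j0 H].
have e : j = 4 * (2 * (j %/ 8) + 1) by lia.
have d : 2 %| j by rewrite e dvdn_mulr.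
have := H 2 isT d 0.
have -> : logn 2 j = 2.
  rewrite e lognM //; last lia.
  rewrite (@logn_coprime 2 (2 * (j %/ 8) + 1)) ?addn0 //.
  by rewrite coprime2n addn1 /= oddM.
by [].
Qed.

Lemma wc_le (A : nat -> Prop) n s : window_count A n s <= s.
Proof.
rewrite /window_count.
apply: (@leq_trans (\sum_(n.+1 <= a < (n+s).+1) 1)).
  by apply: leq_sum => i _; case: asboolP.
by rewrite sum_nat_const_nat muln1; lia.
Qed.

Lemma wc_split (A : nat -> Prop) n s1 s2 :
  window_count A n (s1 + s2) = window_count A n s1 + window_count A (n + s1) s2.
Proof.
rewrite /window_count (big_cat_nat _ (n := (n + s1).+1)); last lia.
  by rewrite addnA.
lia.
Qed.

Lemma wc8 n : window_count inG3 n 8 <= 7.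
Proof.
pose j := n.+1 + (11 - n %% 8) %% 8.
have hj : j %% 8 = 4 by rewrite /j; lia.
have s8 : 8 = (j - n.+1) + (1 + (n + 8 - j)) by rewrite /j; lia.
rewrite s8 wc_split wc_split.
have -> : window_count inG3 (n + (j - n.+1)) 1 = 0.
  rewrite /window_count.
  have -> : (n + (j - n.+1)).+1 = j by rewrite /j; lia.
  have -> : (n + (j - n.+1) + 1).+1 = j.+1 by rewrite /j; lia.
  rewrite big_nat1.
  by case: asboolP => // /notG3; rewrite hj => /(_ erefl).
have := wc_le inG3 n (j - n.+1).
have := wc_le inG3 (n + (j - n.+1) + 1) (n + 8 - j).
rewrite /j; lia.
Qed.

Lemma wc_bound n s : window_count inG3 n s <= s - s %/ 8.
Proof.
suff H : forall q r n, window_count inG3 n (8 * q + r) <= 7 * q + r.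
  rewrite {1}(divn_eq s 8) mulnC; apply: leq_trans (H _ _ _) _; lia.
elim=> [|q IH] r m; first by rewrite muln0 add0n wc_le.
rewrite mulnS -addnA wc_split.
have := wc8 m; have := IH r (m + 8); lia.
Qed.

Local Open Scope ring_scope.
Local Open Scope classical_set_scope.

Section R.
Variable R : realType.

Let W s := [set ((window_count inG3 n s)%:R : R) | n in [set: nat]].

Lemma mw_ub s : max_window R inG3 s <= (s - s %/ 8)%:R.
Proof.
apply: ge_sup; first by exists (window_count inG3 0 s)%:R; exists 0%N.
by move=> _ [n _ <-]; rewrite ler_nat wc_bound.
Qed.

Lemma mw_ge0 s : 0 <= max_window R inG3 s.
Proof.
apply: (@le_trans _ _ (window_count inG3 0 s)%:R) => //.
apply: ub_le_sup; last by exists 0%N.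
by exists s%:R => _ [n _ <-]; rewrite ler_nat wc_le.
Qed.

Definition u := fun s : nat => max_window R inG3 s / (s%:R : R).

Lemma u_ge0 s : 0 <= u s.
Proof. by rewrite /u divr_ge0 // mw_ge0. Qed.

Lemma u_le1 s : u s <= 1.
Proof.
rewrite /u; case: s => [|s]; first by rewrite invr0 mulr0.
rewrite ler_pdivrMr ?ltr0n // mul1r.
apply: le_trans (mw_ub _) _; rewrite ler_nat; lia.
Qed.

Lemma u_le s : (0 < s)%N -> u s <= 7 / 8 + (s%:R)^-1.
Proof.
move=> s0; rewrite /u ler_pdivrMr ?ltr0n //.
apply: le_trans (mw_ub _) _.
have h : (8 * (s - s %/ 8) <= 7 * s + 8)%N by lia.
have hs : (s%:R : R) != 0 by rewrite pnatr_eq0 -lt0n.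
rewrite mulrDl mulVf //.
have := h; rewrite -(ler_nat R) natrD !natrM => h'.
move: h'; set x := (s - s %/ 8)%:R; set y := s%:R => h'.
lra.
Qed.

Lemma u_bnd : bounded_fun u.
Proof.
exists 1; split; first by [].
move=> M M1 s _ /=.
by rewrite ger0_norm ?u_ge0 //; apply: le_trans (u_le1 s) (ltW M1).
Qed.

Lemma sups_le N : sups u N.+1 <= 7 / 8 + (N.+1%:R)^-1.
Proof.
rewrite /sups /=; apply: ge_sup.
  by exists (u N.+1); exists N.+1 => /=.
move=> _ [k /= Nk <-].
apply: (@le_trans _ _ (7/8 + (k%:R)^-1)); first by apply: u_le; lia.
rewrite lerD2l lef_pV2 ?posrE ?ltr0n //; last lia.
by rewrite ler_nat.
Qed.

Lemma main : limn_sup u <= 7 / 8.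
Proof.
rewrite limn_supE; last exact: u_bnd.
apply/ler_addgt0Pr => e e0.
pose N := Num.truncn e^-1.
have hN := truncnS_gt e^-1.
have : (e^-1) ^-1 >= (N.+1%:R)^-1.
  rewrite lef_pV2 ?posrE ?invr_gt0 ?ltr0n //; exact: ltW.
rewrite invrK => H.
apply: (@le_trans _ _ (sups u N.+1)); last first.
  apply: le_trans (sups_le N) _; by rewrite lerD2l.
apply: ge_inf; last by exists N.+1.
exists 0 => _ [n _ <-].
apply: le_trans (u_ge0 n) _.
apply: ub_le_sup; last by exists n => /=.
by exists 1 => _ [k _ <-]; exact: u_le1.
Qed.
End R.

Theorem mainTheorem1 (R : realType) :
  upper_uniform_density R inG3 <= 7 / 8.
Proof. exact: main. Qed.
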